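(* Let $N\ge 1$, $k\ge 1$ and $1\le m\le k$ be integers. For each $n\in\{m,\ldots,k\}$ let $\mathcal{Q}^{(n)}=\left(q^{(n)}_1,\ldots,q^{(n)}_{N^n}\right)$ be a tuple of vectors $q^{(n)}_l\in\Delta^N$. Define $N\times N$ matrices recursively by $\overline{Q}^{(k+1)}_i:=E_N$ for $1\le i\le N^k$, and, for $n=k,k-1,\ldots,m$ and $1\le i\le N^{n-1}$, $$\overline{Q}^{(n)}_i:=\left(\overline{Q}^{(n+1)}_{N(i-1)+1}\,q^{(n)}_{N(i-1)+1},\ \overline{Q}^{(n+1)}_{N(i-1)+2}\,q^{(n)}_{N(i-1)+2},\ \ldots,\ \overline{Q}^{(n+1)}_{N(i-1)+N}\,q^{(n)}_{N(i-1)+N}\right).$$ Then $$\mathcal{S}\left(\mathcal{Q}^{(m)},\ldots,\mathcal{Q}^{(k)}\right)=C^{(m)}_1\sum_{i=1}^{N^{m-1}}E_{N^{m-1},i}\otimes\overline{Q}^{(m)}_i.$$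
   Context: $\Delta^{n}$ denotes the set of probability vectors in $\mathbb{R}^n$ (column vectors with nonnegative entries summing to $1$). $E_n$ is the $n\times n$ identity matrix, $e_{n,i}$ the $i$-th standard basis column vector of $\mathbb{R}^n$, $E_{n,i}:=e_{n,i}e_{n,i}^{T}$, $\mathbf{1}_n\in\mathbb{R}^n$ the all-ones vector, and $\otimes$ the Kronecker product. The commutation matrix is $C_{n,m}:=\sum_{i=1}^{m}e_{m,i}^{T}\otimes E_n\otimes e_{m,i}$. For integers $k\ge 0$ and $0\le m\le k$ (with $N$ fixed): $M^{(k)}_m:=E_{N^m}\otimes\mathbf{1}_N^{T}\otimes E_{N^{k-m}}\in\mathbb{R}^{N^k\times N^{k+1}}$; for a tuple $\mathcal{Q}=(q_1,\ldots,q_{N^k})$ of vectors in $\Delta^N$, $B^{(k)}_m(\mathcal{Q}):=\sum_{i=1}^{N^m}\sum_{j=1}^{N^{k-m}}E_{N^m,i}\otimes q_{N^{k-m}(i-1)+j}\otimes E_{N^{k-m},j}\in\mathbb{R}^{N^{k+1}\times N^k}$; $C^{(k)}_m:=C_{N^m,N^{k-m}}$. The shift matrix of tuples $\mathcal{Q}^{(m)},\ldots,\mathcal{Q}^{(k)}$ (where $\mathcal{Q}^{(n)}$ has $N^n$ entries) is the $N^m\times N^m$ matrix $$\mathcal{S}\left(\mathcal{Q}^{(m)},\ldots,\mathcal{Q}^{(k)}\right):=M^{(m)}_m M^{(m+1)}_{m+1}\cdots M^{(k)}_k\,C^{(k+1)}_1\,B^{(k)}_k\left(\mathcal{Q}^{(k)}\right)B^{(k-1)}_{k-1}\left(\mathcal{Q}^{(k-1)}\right)\cdots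 B^{(m)}_m\left(\mathcal{Q}^{(m)}\right).$$ *)

(* Defs.v *)
(* Kronecker product = mathcomp-real-closed's [tensmx]
   (row/column index of (A *t B) at (i,j) is  i * p + j, the standard
   Kronecker convention). *)
From HB Require Import structures.
From mathcomp Require Import all_boot all_order all_algebra.
From mathcomp Require Export mxtens.
Set Implicit Arguments. Unset Strict Implicit. Unset Printing Implicit Defensive.
Import Order.TTheory GRing.Theory Num.Theory.
Local Open Scope ring_scope.

Section Defs.
Variable R : realFieldType.
Variable N : nat.

Definition prob_vec (v : 'cV[R]_N) : Prop :=
  (forall i, 0 <= v i 0) /\ \sum_(i < N) v i 0 = 1.

Definition kron {m n p q : nat} (A : 'M[R]_(m, n)) (B : 'M[R]_(p, q)) :
  'M[R]_(m * p, n * q) := tensmx A B.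

Definition Emx (n : nat) (i : 'I_n) : 'M[R]_n := delta_mx i i.

Definition commmx (n m : nat) : 'M[R]_(1 * n * m, m * n * 1) :=
  \sum_(i < m) kron (kron (delta_mx 0 i : 'M[R]_(1, m)) (1%:M : 'M[R]_n))
                    (delta_mx i 0 : 'M[R]_(m, 1)).

Lemma dim_eq1 (k m : nat) : (m <= k)%N -> (N ^ m * 1 * N ^ (k - m) = N ^ k)%N.
Proof. by move=> H; rewrite muln1 -expnD subnKC. Qed.
Lemma dim_eq2 (k m : nat) : (m <= k)%N -> (N ^ m * N * N ^ (k - m) = N ^ k.+1)%N.
Proof. by move=> H; rewrite -expnSr -expnD addSn subnKC. Qed.
Lemma dim_eq3 (k m : nat) : (m <= k)%N -> (N ^ m * N ^ (k - m) = N ^ k)%N.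
Proof. by move=> H; rewrite -expnD subnKC. Qed.
Lemma dim_eq4 (k m : nat) : (m <= k)%N -> (1 * N ^ m * N ^ (k - m) = N ^ k)%N.
Proof. by move=> H; rewrite mul1n -expnD subnKC. Qed.
Lemma dim_eq5 (k m : nat) : (m <= k)%N -> (N ^ (k - m) * N ^ m * 1 = N ^ k)%N.
Proof. by move=> H; rewrite muln1 -expnD subnK. Qed.

Definition Mmx (k m : nat) (H : (m <= k)%N) : 'M[R]_(N ^ k, N ^ k.+1) :=
  castmx (dim_eq1 H, dim_eq2 H)
    (kron (kron (1%:M : 'M[R]_(N ^ m)) (const_mx 1 : 'M[R]_(1, N)))
          (1%:M : 'M[R]_(N ^ (k - m)))).

(* B^{(k)}_m(Q), Q = (q_1,...,q_{N^k}) given as a function on 'I_(N^k)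
   (0-based: q_{N^{k-m}(i-1)+j} becomes Q (N^{k-m} i + j)) *)
Definition Bmx (k m : nat) (H : (m <= k)%N) (Q : 'I_(N ^ k) -> 'cV[R]_N) :
  'M[R]_(N ^ k.+1, N ^ k) :=
  castmx (dim_eq2 H, dim_eq1 H)
    (\sum_(i < N ^ m) \sum_(j < N ^ (k - m))
        kron (kron (Emx i) (Q (cast_ord (dim_eq3 H) (mxtens_index (i, j)))))
             (Emx j)).

Definition Cmx (k m : nat) (H : (m <= k)%N) : 'M[R]_(N ^ k) :=
  castmx (dim_eq4 H, dim_eq5 H) (commmx (N ^ m) (N ^ (k - m))).

(* A family of tuples: Qs n l = q^{(n)}_{l+1} (0-based index l < N^n). *)
Definition tupleQ (Qs : nat -> nat -> 'cV[R]_N) (n : nat) : 'I_(N ^ n) -> 'cV[R]_N :=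
  fun l => Qs n l.
Arguments tupleQ : clear implicits.

(* Mprod n j = M^{(n)}_n M^{(n+1)}_{n+1} ... M^{(n+j)}_{n+j} *)
Fixpoint Mprod (n j : nat) : 'M[R]_(N ^ n, N ^ (n + j).+1) :=
  match j with
  | 0 => castmx (erefl, congr1 (fun x => N ^ x.+1)%N (esym (addn0 n)))
                (Mmx (leqnn n))
  | j'.+1 => Mmx (leqnn n) *m
       castmx (erefl, congr1 (fun x => N ^ x.+1)%N (addSnnS n j')) (Mprod n.+1 j')
  end.

(* Bprod Qs n j = B^{(n+j)}_{n+j}(Q^{(n+j)}) ... B^{(n)}_n(Q^{(n)}) *)
Fixpoint Bprod (Qs : nat -> nat -> 'cV[R]_N) (n j : nat) :
    'M[R]_(N ^ (n + j).+1, N ^ n) :=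
  match j with
  | 0 => castmx (congr1 (fun x => N ^ x.+1)%N (esym (addn0 n)), erefl)
                (Bmx (leqnn n) (tupleQ Qs n))
  | j'.+1 =>
      castmx (congr1 (fun x => N ^ x.+1)%N (addSnnS n j'), erefl) (Bprod Qs n.+1 j')
        *m Bmx (leqnn n) (tupleQ Qs n)
  end.

Lemma dim_eq6 (m k : nat) : (m <= k)%N -> (N ^ (m + (k - m)).+1 = N ^ k.+1)%N.
Proof. by move=> H; rewrite subnKC. Qed.

Definition shiftmx (Qs : nat -> nat -> 'cV[R]_N) (m k : nat) (H : (m <= k)%N) :
    'M[R]_(N ^ m) :=
  castmx (erefl, dim_eq6 H) (Mprod m (k - m))
  *m Cmx (isT : (1 <= k.+1)%N)
  *m castmx (dim_eq6 H, erefl) (Bprod Qs m (k - m)).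

(* Qbar d i = \overline{Q}^{(k+1-d)}_{i+1}  (0-based index i).
   d = 0 : level k+1, identity; step d -> d+1 goes from level n+1 to n. *)
Fixpoint Qbar (Qs : nat -> nat -> 'cV[R]_N) (k d : nat) (i : nat) : 'M[R]_N :=
  match d with
  | 0 => 1%:M
  | d'.+1 =>
      \matrix_(r < N, c < N)
         ((Qbar Qs k d' (N * i + c) *m Qs (k - d')%N (N * i + c)) r 0)
  end.

Definition QbarL (Qs : nat -> nat -> 'cV[R]_N) (k n i : nat) : 'M[R]_N :=
  Qbar Qs k (k.+1 - n) i.

Lemma dim_eq7 (m : nat) : (1 <= m)%N -> (N ^ (m - 1) * N = N ^ m)%N.
Proof. by move=> H; rewrite -expnSr subn1 prednK. Qed.

Definition Qbar_sum (Qs : nat -> nat -> 'cV[R]_N) (k m : nat) (H : (1 <= m)%N) :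
    'M[R]_(N ^ m) :=
  castmx (dim_eq7 H, dim_eq7 H)
    (\sum_(i < N ^ (m - 1)) kron (Emx i) (QbarL Qs k m i)).

End Defs.
Arguments tupleQ {R N} Qs n.

(* Main.v *)
Require Import Defs.
From HB Require Import structures.
From mathcomp Require Import all_boot all_order all_algebra.
From mathcomp Require Import zify.
Import Order.TTheory GRing.Theory Num.Theory.
Local Open Scope ring_scope.

Definition mget (R : realFieldType) {m n} (A : 'M[R]_(m,n)) (i j : nat) : R :=
  match (insub i : option 'I_m), (insub j : option 'I_n) with
  | Some a, Some b => A a b | _, _ => 0 end.
Arguments mget {R m n}.

Lemma mgetE (R : realFieldType) m n (A : 'M[R]_(m,n)) (i : 'I_m) (j : 'I_n) :
  mget A i j = A i j.
Proof. by rewrite /mget !valK. Qed.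

Lemma mget_in (R : realFieldType) m n (A : 'M[R]_(m,n)) i j (Hi : (i < m)%N) (Hj : (j < n)%N) :
  mget A i j = A (Ordinal Hi) (Ordinal Hj).
Proof. by rewrite -mgetE. Qed.
Arguments mget_in {R m n} A {i j} Hi Hj.

Lemma mget_outl (R : realFieldType) m n (A : 'M[R]_(m,n)) i j : (m <= i)%N -> mget A i j = 0.
Proof.
move=> H; rewrite /mget.
have -> : (insub i : option 'I_m) = None by rewrite insubN // -leqNgt.
by [].
Qed.

Lemma mget_outr (R : realFieldType) m n (A : 'M[R]_(m,n)) i j : (n <= j)%N -> mget A i j = 0.
Proof.
move=> H; rewrite /mget.
have -> : (insub j : option 'I_n) = None by rewrite insubN // -leqNgt.
by case: insub.
Qed.

Lemma mget_eq (R : realFieldType) m n (A B : 'M[R]_(m,n)) :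
  (forall i j, (i < m)%N -> (j < n)%N -> mget A i j = mget B i j) -> A = B.
Proof. by move=> H; apply/matrixP => i j; rewrite -!mgetE H. Qed.

Lemma mget_cast (R : realFieldType) m n m' n' (E : (m = m') * (n = n')) (A : 'M[R]_(m,n)) i j :
  mget (castmx E A) i j = mget A i j.
Proof. case: E => e1 e2; subst. by rewrite castmx_id. Qed.

Lemma mget_mul (R : realFieldType) m n p (A : 'M[R]_(m,n)) (B : 'M[R]_(n,p)) i j :
  mget (A *m B) i j = \sum_(0 <= l < n) mget A i l * mget B l j.
Proof.
case: (ltnP i m) => Hi; last first.
  by rewrite mget_outl // big1 // => l _; rewrite mget_outl ?mul0r.
case: (ltnP j p) => Hj; last first.
  by rewrite mget_outr // big1 // => l _; rewrite [mget B _ _]mget_outr ?mulr0.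
rewrite (mget_in _ Hi Hj) mxE big_mkord; apply: eq_bigr => l _.
by rewrite -[i]/(nat_of_ord (Ordinal Hi)) -[j]/(nat_of_ord (Ordinal Hj)) !mgetE.
Qed.

Lemma mget_sum (R : realFieldType) m n (I : Type) (r : seq I) (P : pred I) (F : I -> 'M[R]_(m,n)) i j :
  mget (\sum_(x <- r | P x) F x) i j = \sum_(x <- r | P x) mget (F x) i j.
Proof.
case: (ltnP i m) => Hi; last by rewrite mget_outl // big1 // => l _; rewrite mget_outl.
case: (ltnP j n) => Hj; last by rewrite mget_outr // big1 // => l _; rewrite mget_outr.
rewrite (mget_in _ Hi Hj) summxE; apply: eq_bigr => l _; by rewrite -mget_in.
Qed.

Lemma mget_kron (R : realFieldType) m n p q (A : 'M[R]_(m,n)) (B : 'M[R]_(p,q)) i j :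
  mget (kron A B) i j = mget A (i %/ p) (j %/ q) * mget B (i %% p) (j %% q).
Proof.
case: (ltnP i (m * p)) => Hi; last first.
  rewrite mget_outl //; case: p A B Hi => [|p] A B Hi; first by rewrite [mget B _ _]mget_outl ?mulr0.
  by rewrite mget_outl ?mul0r // leq_divRL.
case: (ltnP j (n * q)) => Hj; last first.
  rewrite mget_outr //; case: q A B Hj => [|q] A B Hj; first by rewrite [mget B _ _]mget_outr ?mulr0.
  by rewrite mget_outr ?mul0r // leq_divRL.
rewrite (mget_in _ Hi Hj) /kron /tensmx mxE.
by rewrite -!mget_in.
Qed.

Lemma mget_delta (R : realFieldType) m n (a : 'I_m) (b : 'I_n) i j :
  mget (delta_mx a b : 'M[R]_(m,n)) i j = ((i == a) && (j == b))%:R.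
Proof.
case: (ltnP i m) => Hi; last first.
  rewrite mget_outl //; have -> : (i == a) = false; last by [].
  by apply/negbTE; rewrite neq_ltn (leq_trans (ltn_ord a) Hi) orbT.
case: (ltnP j n) => Hj; last first.
  rewrite mget_outr //; have -> : (j == b) = false; last by rewrite andbF.
  by apply/negbTE; rewrite neq_ltn (leq_trans (ltn_ord b) Hj) orbT.
by rewrite (mget_in _ Hi Hj) mxE.
Qed.

Lemma mget_id (R : realFieldType) n i j :
  mget (1%:M : 'M[R]_n) i j = ((i == j) && (i < n)%N)%:R.
Proof.
case: (ltnP i n) => Hi; last by rewrite mget_outl // andbF.
case: (ltnP j n) => Hj; last first.
  rewrite mget_outr //; have -> : (i == j) = false; last by [].
  by apply/negbTE; rewrite neq_ltn (leq_trans Hi Hj).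
by rewrite (mget_in _ Hi Hj) mxE andbT.
Qed.

Lemma mget_const (R : realFieldType) m n (c : R) i j :
  mget (const_mx c : 'M[R]_(m,n)) i j = ((i < m) && (j < n))%N%:R * c.
Proof.
case: (ltnP i m) => Hi; last by rewrite mget_outl // mul0r.
case: (ltnP j n) => Hj; last by rewrite mget_outr // mul0r.
by rewrite (mget_in _ Hi Hj) mxE mul1r.
Qed.

Lemma sum_delta (R : realFieldType) (B c : nat) (F : nat -> R) :
  \sum_(0 <= l < B) ((l == c)%:R * F l) = if (c < B)%N then F c else 0.
Proof.
case: ltnP => H.
  rewrite big_mkord (bigD1 (Ordinal H)) //= eqxx mul1r big1 ?addr0 // => l Hl.
  have -> : (nat_of_ord l == c) = false; last by rewrite mul0r.
  apply/negbTE; apply: contra Hl => /eqP e; apply/eqP/val_inj; exact: e.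
rewrite big_mkord big1 // => l _.
have -> : (nat_of_ord l == c) = false; last by rewrite mul0r.
by apply/negbTE; rewrite neq_ltn (leq_trans (ltn_ord l) H).
Qed.

Lemma sum_delta' (R : realFieldType) (B c : nat) (F : nat -> R) :
  \sum_(0 <= l < B) ((c == l)%:R * F l) = if (c < B)%N then F c else 0.
Proof. rewrite -sum_delta; apply: eq_bigr => l _; by rewrite eq_sym. Qed.

Lemma sum_split (R : realFieldType) (a N : nat) (F : nat -> R) :
  \sum_(0 <= z < a * N) F z = \sum_(0 <= i < a) \sum_(0 <= c < N) F (i * N + c)%N.
Proof.
elim: a => [|a IH]; first by rewrite mul0n !big_geq.
rewrite mulSn addnC (@big_cat_nat _ _ _ (a * N)) ?leq_addr //= IH big_nat_recr //=.
congr (_ + _).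
transitivity (\sum_(0 + a * N <= i < a * N + N) F i); first by [].
rewrite big_addn addKn; apply: eq_bigr => c _; by rewrite addnC.
Qed.

Lemma natb_mul (R : realFieldType) (b1 b2 : bool) : (b1%:R * b2%:R : R) = (b1 && b2)%:R.
Proof. by case: b1; case: b2; rewrite ?mul1r ?mul0r. Qed.

Lemma lt_mix (r b N D : nat) : (r < N)%N -> (b < D)%N -> (r * D + b < N * D)%N.
Proof.
move=> Hr Hb; apply: (leq_trans (n := r * D + D)); first by rewrite ltn_add2l.
by rewrite -mulSnr leq_mul2r Hr orbT.
Qed.

Lemma eq_mix (a r b D : nat) : (b < D)%N -> ((a == r * D + b) = (r == a %/ D) && (a %% D == b))%N.
Proof.
move=> Hb; have D0 : (0 < D)%N by apply: leq_ltn_trans Hb.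
apply/eqP/andP => [->|[/eqP -> /eqP <-]]; last by rewrite -divn_eq.
by rewrite divnMDl // divn_small // addn0 modnMDl modn_small.
Qed.

Lemma Mmx_get (R : realFieldType) N n (hN : (0 < N)%N) a x :
  (a < N ^ n)%N -> mget (Mmx R N (leqnn n)) a x = (a == (x %/ N)%N)%:R.
Proof.
move=> Ha; rewrite /Mmx mget_cast !mget_kron !mget_id mget_const.
rewrite subnn expn0 !divn1 !modn1 Ha ltn_pmod //=.
by rewrite andbT ?mulr1n ?mul1r ?mulr1.
Qed.

Lemma Mprod_get (R : realFieldType) N (hN : (0 < N)%N) j : forall n a x,
  (a < N ^ n)%N -> (x < N ^ (n + j).+1)%N ->
  mget (Mprod R N n j) a x = (a == (x %/ N ^ j.+1)%N)%:R.
Proof.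
elim: j => [|j IH] n a x Ha Hx.
  by rewrite [Mprod _ _ _ _]/= mget_cast Mmx_get // expn1.
rewrite [Mprod _ _ _ _]/= mget_mul.
transitivity (\sum_(0 <= l < N ^ n.+1) ((l == (x %/ N ^ j.+1)%N)%:R * (a == (l %/ N)%N)%:R : R)).
  apply: eq_big_nat => l /andP[_ Hl].
  rewrite Mmx_get // mget_cast IH //; first by rewrite mulrC.
  by rewrite addSnnS.
rewrite sum_delta.
have -> : (x %/ N ^ j.+1 < N ^ n.+1)%N.
  rewrite ltn_divLR; last by rewrite expn_gt0 hN.
  by rewrite -expnD addSn.
by rewrite -divnMA -expnSr.
Qed.

Lemma Bmx_get (R : realFieldType) N (hN : (0 < N)%N) (Qs : nat -> nat -> 'cV[R]_N) n y x :
  (y < N ^ n.+1)%N -> (x < N ^ n)%N ->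
  mget (Bmx (leqnn n) (tupleQ Qs n)) y x = ((y %/ N)%N == x)%:R * mget (Qs n x) (y %% N)%N 0.
Proof.
move=> Hy Hx; rewrite /Bmx mget_cast mget_sum.
under eq_bigr => i _ do rewrite mget_sum.
under eq_bigr => i _ do under eq_bigr => j _ do rewrite !mget_kron /Emx !mget_delta /tupleQ /=.
rewrite subnn expn0 !divn1 !modn1.
under eq_bigr => i _ do rewrite big_ord1 /= muln1 addn0 mulr1.
rewrite -(big_mkord xpredT (fun i => ((((y %/ N)%N == i) && (x == i))%:R * mget (Qs n i) (y %% N)%N 0))).
transitivity (\sum_(0 <= i < N ^ n) ((x == i)%:R * (((y %/ N)%N == x)%:R * mget (Qs n x) (y %% N)%N 0))).
  apply: eq_big_nat => i _; case: (eqVneq x i) => [<-|ne].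
    by rewrite andbT mul1r.
  by rewrite andbF !mul0r.
by rewrite sum_delta' Hx.
Qed.

Lemma Bprod_supp (R : realFieldType) N (hN : (0 < N)%N) (Qs : nat -> nat -> 'cV[R]_N) j :
  forall n y x, (y %/ N ^ j.+1)%N != x -> mget (Bprod Qs n j) y x = 0.
Proof.
elim: j => [|j IH] n y x H.
  rewrite [Bprod _ _ _]/= mget_cast.
  case: (ltnP y (N ^ n.+1)) => Hy; last by rewrite mget_outl.
  case: (ltnP x (N ^ n)) => Hx; last by rewrite mget_outr.
  rewrite expn1 in H; by rewrite Bmx_get // (negbTE H) mul0r.
rewrite [Bprod _ _ _]/= mget_mul big_nat_cond big1 // => z /andP[/andP[_ Hz] _].
rewrite mget_cast; case: (eqVneq (y %/ N ^ j.+1)%N z) => [e|ne]; last by rewrite IH // mul0r.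
case: (ltnP x (N ^ n)) => Hx; last by rewrite [mget (Bmx _ _) _ _]mget_outr ?mulr0.
rewrite Bmx_get //.
have -> : ((z %/ N)%N == x) = false.
  by apply/negbTE; rewrite -e -divnMA -expnSr.
by rewrite !mul0r mulr0.
Qed.

Lemma sumbound (R : realFieldType) (a b : nat) (F : nat -> R) :
  a = b -> \sum_(0 <= y < a) F y = \sum_(0 <= y < b) F y.
Proof. by move->. Qed.

Lemma Qbar_get (R : realFieldType) N (Qs : nat -> nat -> 'cV[R]_N) k j i r c :
  (r < N)%N -> (c < N)%N ->
  mget (Qbar Qs k j.+1 i) r c =
  \sum_(0 <= l < N) mget (Qbar Qs k j (N * i + c)%N) r l * mget (Qs (k - j)%N (N * i + c)%N) l 0.
Proof.
move=> Hr Hc; rewrite [Qbar _ _ _ _]/= (mget_in _ Hr Hc) mxE /=.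
by rewrite -[(_ *m _) _ _]mgetE mget_mul.
Qed.

Lemma T_get (R : realFieldType) N (hN : (0 < N)%N) (Qs : nat -> nat -> 'cV[R]_N) k j :
  forall n, (n + j)%N = k -> forall r x, (r < N)%N -> (x < N ^ n)%N ->
  \sum_(0 <= y < N ^ (n + j).+1) (((y %% N)%N == r)%:R * mget (Bprod Qs n j) y x)
  = mget (Qbar Qs k j.+1 (x %/ N)%N) r (x %% N)%N.
Proof.
have ex : forall x, (N * (x %/ N) + x %% N)%N = x by move=> x; rewrite mulnC -divn_eq.
elim: j => [|j IH] n Hk r x Hr Hx.
  rewrite Qbar_get //; last by rewrite ltn_pmod.
  rewrite (ex x).
  rewrite subn0; subst k; rewrite [X in Qs X _]addn0 [Qbar _ _ 0 _]/=.
  transitivity (\sum_(0 <= y < N ^ (n + 0).+1) ((y == (x * N + r)%N)%:R * mget (Qs n x) r 0)).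
    apply: eq_big_nat => y /andP[_ Hy]; rewrite addn0 in Hy.
    rewrite [Bprod _ _ _]/= mget_cast Bmx_get // (eq_mix y x r N Hr) (eq_sym x).
    case: (eqVneq (y %% N)%N r) => [e1|n1]; case: (eqVneq (y %/ N)%N x) => [e2|n2];
      rewrite ?e1 /= ?mul1r ?mul0r ?mulr0 //.
  rewrite sum_delta addn0 expnSr lt_mix //.
  transitivity (\sum_(0 <= l < N) ((r == l)%:R * mget (Qs n x) l 0)).
    by rewrite sum_delta' Hr.
  apply: eq_big_nat => l _; by rewrite mget_id Hr andbT.
have eb : (N ^ (n + j.+1).+1 = N ^ (n.+1 + j).+1)%N by rewrite addSnnS.
have Hk' : (n.+1 + j)%N = k by rewrite addSnnS.
transitivity (\sum_(0 <= z < N ^ n.+1) (mget (Qbar Qs k j.+1 (z %/ N)%N) r (z %% N)%N *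
                 mget (Bmx (leqnn n) (tupleQ Qs n)) z x)).
  rewrite [Bprod _ _ _]/= (sumbound _ _ _ _ eb).
  under eq_bigr => y _ do rewrite mget_mul big_distrr.
  rewrite exchange_big_nat; apply: eq_big_nat => z /andP[_ Hz].
  rewrite -(IH n.+1 Hk' r z Hr Hz) big_distrl; apply: eq_bigr => y _.
  rewrite mget_cast.
  by rewrite /= mulrA.
transitivity (\sum_(0 <= i < N ^ n) ((i == x)%:R *
    \sum_(0 <= c < N) (mget (Qbar Qs k j.+1 i) r c * mget (Qs n x) c 0))).
  rewrite (sumbound _ _ _ _ (expnSr N n)) sum_split; apply: eq_big_nat => i /andP[_ Hi].
  rewrite big_distrr; apply: eq_big_nat => c /andP[_ Hc].
  rewrite Bmx_get //; last by rewrite expnSr lt_mix.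
  rewrite divnMDl // divn_small // addn0 modnMDl modn_small //.
  by rewrite mulrCA.
rewrite sum_delta Hx Qbar_get ?ltn_pmod // ex.
have -> : (k - j.+1)%N = n by rewrite -Hk addnK.
done.
Qed.

Lemma commmx_get (R : realFieldType) n0 m0 x y : (x < n0 * m0)%N ->
  mget (commmx R n0 m0) x y = (((y %/ n0)%N == (x %% m0)%N) && ((x %/ m0)%N == (y %% n0)%N))%:R.
Proof.
move=> Hx.
have m0p : (0 < m0)%N by case: m0 Hx => //; rewrite muln0.
have Hxm : (x %/ m0 < n0)%N by rewrite ltn_divLR.
transitivity (\sum_(0 <= i < m0) (((x %% m0)%N == i)%:R *
   (((y %/ n0)%N == (x %% m0)%N) && ((x %/ m0)%N == (y %% n0)%N))%:R : R)); last first.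
  by rewrite sum_delta' ltn_pmod.
rewrite /commmx mget_sum big_mkord; apply: eq_bigr => i _.
rewrite !mget_kron mget_delta mget_id mget_delta !divn1 !modn1 (divn_small Hxm) (modn_small Hxm) Hxm.
rewrite eqxx andbT /=.
case: (eqVneq (x %% m0)%N i) => [<-|ne]; last by rewrite !mulr0 mul0r.
by rewrite mulr1 mul1r natb_mul.
Qed.

Lemma Qsum_get (R : realFieldType) N (hN : (0 < N)%N) (Qs : nat -> nat -> 'cV[R]_N) k m (hm : (1 <= m)%N) x a' :
  (a' < N ^ m)%N ->
  mget (Qbar_sum Qs k hm) x a' =
  (((x %/ N)%N == (a' %/ N)%N)%:R * mget (QbarL Qs k m (a' %/ N)%N) (x %% N)%N (a' %% N)%N).
Proof.
move=> Ha'.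
have Hb : (a' %/ N < N ^ (m - 1))%N by rewrite ltn_divLR // dim_eq7.
rewrite /Qbar_sum mget_cast mget_sum.
transitivity (\sum_(0 <= i < N ^ (m - 1)) (((a' %/ N)%N == i)%:R *
   (((x %/ N)%N == (a' %/ N)%N)%:R * mget (QbarL Qs k m (a' %/ N)%N) (x %% N)%N (a' %% N)%N))); last first.
  by rewrite sum_delta' Hb.
rewrite big_mkord; apply: eq_bigr => i _; rewrite mget_kron /Emx mget_delta.
case: (eqVneq (a' %/ N)%N i) => [<-|ne]; first by rewrite andbT mul1r.
by rewrite andbF !mul0r.
Qed.

Theorem lemma1 (R : realFieldType) (N k m : nat)
  (hN : (1 <= N)%N) (hk : (1 <= k)%N) (hm : (1 <= m)%N) (hmk : (m <= k)%N)
  (Qs : nat -> nat -> 'cV[R]_N)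
  (hQ : forall n l : nat, (m <= n <= k)%N -> (l < N ^ n)%N -> prob_vec (Qs n l)) :
  shiftmx Qs hmk = Cmx R N hm *m Qbar_sum Qs k hm.
Proof.
set D := (N ^ (m - 1))%N.
have Dp : (0 < D)%N by rewrite expn_gt0 hN.
have eNm : (N ^ m = D * N)%N by rewrite /D dim_eq7.
have eNk : (N ^ k = D * N ^ (k - m).+1)%N.
  rewrite /D -expnD; congr (expn _ _); lia.
apply: mget_eq => a a' Ha Ha'.
have HaD : (a %/ D < N)%N by rewrite ltn_divLR // mulnC -eNm.
have Ha'N : (a' %/ N < D)%N by rewrite ltn_divLR // -eNm.
have HamD : (a %% D < D)%N by rewrite ltn_pmod.
rewrite mget_mul.
transitivity (\sum_(0 <= x < N ^ m) ((x == (a %% D) * N + a %/ D)%N%:R *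
   (((a %% D)%N == (a' %/ N)%N)%:R * mget (QbarL Qs k m (a' %/ N)%N) (a %/ D)%N (a' %% N)%N))); last first.
  apply: eq_big_nat => x /andP[_ Hx]; symmetry.
  rewrite /Cmx mget_cast commmx_get; last by rewrite expn1 mulnC -eNm.
  rewrite Qsum_get // expn1 -/D.
  case: (eqVneq x ((a %% D) * N + a %/ D)%N) => [->|ne].
    rewrite (divnMDl _ _ hN) (divn_small HaD) addn0 modnMDl (modn_small HaD).
    by rewrite !eqxx /= mul1r.
  rewrite mul0r.
  have -> : (((x %/ N)%N == (a %% D)%N) && ((a %/ D)%N == (x %% N)%N)) = false.
    apply/negbTE; apply: contra ne => /andP[/eqP e1 /eqP e2].
    by rewrite -e1 e2 -divn_eq.
  by rewrite mul0r.
rewrite sum_delta.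
have -> : (a %% D * N + a %/ D < N ^ m)%N by rewrite eNm lt_mix.
rewrite /QbarL (subSn hmk).
rewrite -(T_get _ _ hN Qs k (k - m) m (subnKC hmk) (a %/ D) a' HaD Ha') big_distrr.
rewrite (sumbound _ _ _ _ (dim_eq6 N hmk)).
rewrite /shiftmx mget_mul /=; apply: eq_big_nat => y /andP[_ Hy].
have Hyb : (y %/ N < N ^ k)%N by rewrite ltn_divLR // -expnSr.
rewrite mget_cast mget_mul.
set x0 := ((y %% N) * N ^ k + y %/ N)%N.
have inner : \sum_(0 <= x < N ^ k.+1) (mget (castmx (erefl, dim_eq6 N hmk) (Mprod R N m (k - m))) a x *
    mget (Cmx R N (isT : (1 <= k.+1)%N)) x y) = (a == (x0 %/ N ^ (k - m).+1)%N)%:R.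
  transitivity (\sum_(0 <= x < N ^ k.+1) ((x == x0)%:R * (a == (x0 %/ N ^ (k - m).+1)%N)%:R : R)); last first.
    by rewrite sum_delta /x0 expnS lt_mix // ltn_pmod.
  apply: eq_big_nat => x /andP[_ Hx].
  rewrite mget_cast Mprod_get //; last by rewrite subnKC.
  rewrite /Cmx mget_cast commmx_get; last by rewrite expn1 subn1 /= -expnS.
  rewrite expn1 subn1 /=.
  have -> : ((y %/ N)%N == (x %% N ^ k)%N) && ((x %/ N ^ k)%N == (y %% N)%N) = (x == x0).
    by rewrite /x0 (eq_mix _ _ _ _ Hyb) andbC [(y %/ N)%N == _]eq_sym [(x %/ _)%N == _]eq_sym.
  by case: (eqVneq x x0) => [->|ne]; rewrite ?mulr1 ?mul1r ?mulr0 ?mul0r.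
rewrite inner /x0 eNk mulnA divnMDl ?expn_gt0 ?hN // -divnMA (mulnC N) divnMA.
case: (eqVneq (y %/ N ^ (k - m).+1)%N a') => [e|ne].
  by rewrite e (eq_mix a (y %% N) (a' %/ N) D Ha'N) -natb_mul -mulrA mulrCA.
by rewrite (Bprod_supp _ _ hN _ _ _ _ _ ne) !mulr0.
Qed.
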